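(* Let $n\ge2$, $p\in\mathbb{Q}[t]$, $q(t)=t\,p(t)$, and $e_1=t_1+\dots+t_n$. Then \[ a_{(p,1,0,\dots,0)}=a_{(p,0,0,\dots,0)}\cdot e_1-a_{(q,0,0,\dots,0)}. \]
   Context: For $p\in\mathbb{Q}[t]$ and nonnegative integers $\lambda_2,\dots,\lambda_n$, $a_{(p,\lambda_2,\dots,\lambda_n)}(t_1,\dots,t_n)$ is the determinant of the $n\times n$ matrix whose first row is $(p(t_1),\dots,p(t_n))$ and whose $k$-th row, for $k=2,\dots,n$, is $(t_1^{\lambda_k+n-k},\dots,t_n^{\lambda_k+n-k})$. *)

(* Defs.v *)
From HB Require Import structures.
From mathcomp Require Import all_boot all_algebra.
From mathcomp Require Import mpoly.
Set Implicit Arguments. Unset Strict Implicit. Unset Printing Implicit Defensive.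
Import GRing.Theory.
Local Open Scope ring_scope.

(* a_(p, lam_2, ..., lam_n)(t_1,...,t_n) as an element of Q[t_1,...,t_n].
   [lam] is the list [:: lam_2; ...; lam_n].  Rows/columns are 0-indexed:
   row 0 is (p(t_1), ..., p(t_n)); row k >= 1 (i.e. paper row k+1) is
   (t_j ^ (lam_{k+1} + n - (k+1)))_j, and lam_{k+1} = nth 0 lam k.-1. *)
Definition adet (n : nat) (p : {poly rat}) (lam : seq nat) : {mpoly rat[n]} :=
  \det (\matrix_(k < n, j < n)
          if k == 0 :> nat then (map_poly (@mpolyC n rat) p).['X_j]
          else 'X_j ^+ (nth 0%N lam k.-1 + n - k.+1))%N.

(* Main.v *)
Require Import Defs.
From HB Require Import structures.
From mathcomp Require Import all_boot all_algebra perm.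
From mathcomp Require Import mpoly.
Local Open Scope ring_scope.
Import GRing.Theory.

Lemma det_rowscale_sum (R : comNzRingType) n (A : 'M[R]_n) (x : 'I_n -> R) :
  \sum_k \det (\matrix_(i, j) if i == k then A i j * x j else A i j)
  = \det A * \sum_j x j.
Proof.
rewrite /determinant exchange_big /= mulr_suml; apply: eq_bigr => s _.
rewrite -mulrA -mulr_sumr; congr (_ * _).
rewrite mulr_sumr [RHS](reindex_inj (@perm_inj _ s)) /=; apply: eq_bigr => k _.
rewrite (bigD1 k) //= (bigD1 k (P := predT)) //= !mxE eqxx.
rewrite mulrAC; congr (_ * _); congr (_ * _).
by apply: eq_bigr => i /negbTE ik; rewrite mxE ik.
Qed.

Lemma aux (R : zmodType) (a b c L : R) : a = c -> L = b -> L = a + b - c.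
Proof. by move=> -> ->; rewrite addrAC subrr add0r. Qed.

Lemma key (R : comNzRingType) m (f x : 'I_m.+2 -> R) :
 \det (\matrix_(k,j) if k == 0 :> nat then f j else x j ^+ (if k == 1 :> nat then m.+1 else m.+1 - k)%N) =
 \det (\matrix_(k,j) if k == 0 :> nat then f j else x j ^+ (m.+1 - k)) * \sum_j x j
 - \det (\matrix_(k,j) if k == 0 :> nat then f j * x j else x j ^+ (m.+1 - k)).
Proof.
rewrite -det_rowscale_sum big_ord_recl big_ord_recl big1 ?addr0; last first.
  move=> k _.
  apply: (@determinant_alternate _ _ _ (lift ord0 (lift ord0 k)) (inord k.+1)).
    have hk : (k.+1 < m.+2)%N by rewrite !ltnS; exact: ltnW.
    apply/eqP => /(congr1 val); rewrite /= /bump /= inordK // !add1n => H; exact: (n_Sn k.+1) (esym H).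
  have hk : (k.+1 < m.+2)%N by rewrite !ltnS; exact: ltnW.
  have ne : (inord k.+1 == lift ord0 (lift ord0 k)) = false.
    apply/negbTE/eqP => /(congr1 val); rewrite /= /bump /= inordK // !add1n => H; exact: (n_Sn k.+1) H.
  move=> j; rewrite !mxE eqxx ne /= /bump /= inordK // !add1n /=.
  by rewrite -exprSr subnSK // ltnS ltn_ord.
apply: aux.
  congr (\det _); apply/matrixP => i j; rewrite !mxE.
  by case: i => [[|i] Hi].
congr (\det _); apply/matrixP => i j; rewrite !mxE.
case: i => [[|[|i]] Hi] //=.
by rewrite subn1 /= exprSr.
Qed.

Theorem lemma3p9 (n : nat) (p : {poly rat}) :
  (2 <= n)%N ->
  adet n p (1%N :: nseq n.-2 0%N) =
    adet n p (nseq n.-1 0%N) * (\sum_(i < n) 'X_i)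
    - adet n ('X * p) (nseq n.-1 0%N).
Proof.
case: n => [|[|m]] // _.
rewrite /adet.
set P := map_poly _ p.
have -> : map_poly (@mpolyC m.+2 rat) ('X * p) = 'X * P by rewrite rmorphM /= map_polyX.
set x := fun j : 'I_m.+2 => ('X_j : {mpoly rat[m.+2]}).
set f := fun j : 'I_m.+2 => P.[x j].
rewrite [LHS](_ : _ = \det (\matrix_(k,j) if k == 0 :> nat then f j else x j ^+ (if k == 1 :> nat then m.+1 else m.+1 - k)%N)); last first.
  congr (\det _); apply/matrixP => i j; rewrite !mxE.
  case: i => [[|[|i]] Hi] //=.
  by rewrite nth_nseq if_same add0n subSS.
rewrite key; congr (_ * _ - _).
- congr (\det _); apply/matrixP => i j; rewrite !mxE.
  case: i => [[|i] Hi] //=.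
  by rewrite -[0%N :: nseq m 0%N]/(nseq m.+1 0%N) nth_nseq if_same add0n subSS.
- congr (\det _); apply/matrixP => i j; rewrite !mxE.
  case: i => [[|i] Hi] //=.
    by rewrite /f /x hornerM hornerX mulrC.
  by rewrite -[0%N :: nseq m 0%N]/(nseq m.+1 0%N) nth_nseq if_same add0n subSS.
Qed.
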